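(* Let $f: \mathbb{R}^n \to \mathbb{R}^n$ be topical and $x \in \mathbb{R}^n$. There exists $1 \le i \le n$ such that for all $k \in \mathbb{N}$, $x_i + k\,\overline{\chi}(f) \le f^k_i(x)$.
   Context: $f$ is topical if $f(x+h) = f(x)+h$ for all $h\in\mathbb{R}$ (scalar added to each coordinate) and $x\le y$ componentwise implies $f(x)\le f(y)$. The upper cycle time is $\overline{\chi}(f) = \lim_{k\to\infty} \max_i f^k_i(x)/k$, which exists and is independent of $x$. *)

(* Defs.v *)
From mathcomp Require Import all_boot all_order all_algebra.
From mathcomp Require Import all_classical all_reals all_analysis.
Set Implicit Arguments. Unset Strict Implicit. Unset Printing Implicit Defensive.
Import Order.TTheory GRing.Theory Num.Theory.
Import numFieldNormedType.Exports.
Local Open Scope ring_scope.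

(* Maximum coordinate of a vector (for n = 0 it is irrelevant; we put 0). *)
Definition vmax (R : realType) (n : nat) : ('I_n -> R) -> R :=
  match n return ('I_n -> R) -> R with
  | 0 => fun _ => 0
  | m.+1 => fun v => \big[Num.max/v ord0]_(i < m.+1) v i
  end.

Definition topical (R : realType) (n : nat) (f : ('I_n -> R) -> ('I_n -> R)) : Prop :=
  (forall (x : 'I_n -> R) (h : R) (i : 'I_n), f (fun j => x j + h) i = f x i + h) /\
  (forall (x y : 'I_n -> R), (forall j, x j <= y j) -> forall i, f x i <= f y i).

(* Upper cycle time: lim_{k -> oo} max_i f^k_i(x) / k, taken at x = 0
   (the limit exists and does not depend on x for topical f). *)
Definition upper_cycle_time (R : realType) (n : nat)
  (f : ('I_n -> R) -> ('I_n -> R)) : R :=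
  limn (fun k : nat => vmax (iter k f (fun _ => 0)) / k%:R).

(* Main.v *)
Require Import Defs.
From mathcomp Require Import all_boot all_order all_algebra.
From mathcomp Require Import lra.
Set Implicit Arguments. Unset Strict Implicit. Unset Printing Implicit Defensive.
From mathcomp Require Import all_classical all_reals all_analysis.
Import Order.TTheory GRing.Theory Num.Theory.
Local Open Scope ring_scope.

Section Vec.
Variables (R : realType) (n : nat).

Lemma vmax_ge (v : 'I_n.+1 -> R) i : v i <= vmax v.
Proof. exact: le_bigmax. Qed.

Lemma vmax_le (v : 'I_n.+1 -> R) c : (forall i, v i <= c) -> vmax v <= c.
Proof. move=> H; apply: bigmax_le => // i _; exact: H. Qed.

Variable f : ('I_n.+1 -> R) -> ('I_n.+1 -> R).
Hypothesis hf : topical f.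

Lemma iter_hom k x h i : iter k f (fun j => x j + h) i = iter k f x i + h.
Proof.
elim: k i => [//|k IH] i /=.
have -> : iter k f (fun j => x j + h) = (fun j => iter k f x j + h).
  by apply: funext => j; rewrite IH.
by rewrite hf.1.
Qed.

Lemma iter_mono k x y : (forall j, x j <= y j) -> forall i, iter k f x i <= iter k f y i.
Proof. move=> H; elim: k => [//|k IH] i /=; exact: hf.2. Qed.

Lemma iter_sub y lam : (forall i, f y i <= y i + lam) ->
  forall k i, iter k f y i <= y i + k%:R * lam.
Proof.
move=> H; elim=> [|k IH] i /=; first by rewrite mul0r addr0.
apply: le_trans (_ : f (fun j => y j + k%:R * lam) i <= _).
  by apply: hf.2.
rewrite hf.1; apply: le_trans (lerD (H i) (lexx _)) _.
by rewrite -addrA -(add1n k) natrD mulrDl mul1r.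
Qed.

Definition aa k := vmax (iter k f (fun _ => 0)).

Lemma aa0 : aa 0 = 0.
Proof.
apply/le_anti/andP; split; first by apply: vmax_le.
exact: (vmax_ge (fun _ => 0) ord0).
Qed.

Lemma aa_sub k l : aa (k + l) <= aa k + aa l.
Proof.
rewrite /aa iterD; apply: vmax_le => i.
apply: le_trans (_ : iter k f (fun j => 0 + aa l) i <= _).
  apply: iter_mono => j; rewrite add0r; exact: vmax_ge.
by rewrite (iter_hom k (fun _ => 0)) lerD2r vmax_ge.
Qed.

Definition mlow := - vmax (fun i => - f (fun _ => 0) i).

Lemma iter_low k j : k%:R * mlow <= iter k f (fun _ => 0) j.
Proof.
elim: k j => [|k IH] j; first by rewrite mul0r.
rewrite /= -(add1n k) natrD mulrDl mul1r.
apply: le_trans (_ : f (fun j => 0 + k%:R * mlow) j <= _).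
  rewrite hf.1 lerD2r /mlow lerNl; exact: (vmax_ge (fun i => - f _ i)).
by apply: hf.2 => t; rewrite add0r.
Qed.

Lemma aa_low k : k%:R * mlow <= aa k.
Proof. exact: le_trans (iter_low k ord0) (vmax_ge _ _). Qed.

End Vec.
Local Open Scope classical_set_scope.
Section Fekete.
Variables (R : realType) (a : nat -> R) (m : R).
Hypotheses (a0 : a 0 = 0) (asub : forall k l, a (k + l)%N <= a k + a l)
  (alow : forall k, k%:R * m <= a k).

Let u k := a k / k%:R.
Let S := [set u k | k in [set k | (0 < k)%N]].

Lemma S_lb : has_lbound S.
Proof.
exists m => _ [k /= k0 <-]; rewrite /u ler_pdivlMr ?ltr0n // mulrC; exact: alow.
Qed.

Lemma S_inf {k} : (0 < k)%N -> inf S <= u k.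
Proof. move=> k0; apply: ge_inf; [exact: S_lb | by exists k]. Qed.

Lemma a_mul q k : a (q * k)%N <= q%:R * a k.
Proof.
elim: q => [|q IH]; first by rewrite mul0n a0 mul0r.
rewrite mulSn -(add1n q) natrD mulrDl mul1r.
exact: le_trans (asub _ _) (lerD (lexx _) IH).
Qed.

Lemma a_one r : a r <= r%:R * a 1.
Proof.
elim: r => [|r IH]; first by rewrite a0 mul0r.
rewrite -(add1n r) natrD mulrDl mul1r.
exact: le_trans (asub _ _) (lerD (lexx _) IH).
Qed.

Lemma u_cvg : u @ \oo --> inf S.
Proof.
have hS : has_inf S by split; [exists (u 1), 1%N | exact: S_lb].
apply/cvgrPdist_le => e e0.
have [_ [m0 /= m00 <-] hm0] := inf_adherent (divr_gt0 e0 (ltr0n R 2)) hS.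
set L := inf S in hm0 *.
pose D := m0%:R * `|u m0| + m0%:R * `|a 1|.
have D0 : 0 <= D by rewrite addr_ge0 // mulr_ge0.
have hk : forall k, a k <= k%:R * u m0 + D.
  move=> k.
  have ek := divn_eq k m0.
  set q := (k %/ m0)%N in ek; set r := (k %% m0)%N in ek.
  have rm : (r < m0)%N by rewrite ltn_pmod.
  have am0 : a m0 = m0%:R * u m0 by rewrite /u mulrC divfK // pnatr_eq0 -lt0n.
  have h1 : a k <= q%:R * a m0 + r%:R * a 1.
    have -> : a k = a (q * m0 + r)%N by rewrite -ek.
    apply: le_trans (asub _ _) _.
    by apply: lerD; [exact: a_mul | exact: a_one].
  have ekR : (q * m0)%:R = k%:R - r%:R :> R by rewrite [in RHS]ek natrD addrK.
  have h2 : q%:R * a m0 = k%:R * u m0 - r%:R * u m0.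
    by rewrite am0 mulrA -natrM ekR mulrBl.
  have rR : r%:R <= m0%:R :> R by rewrite ler_nat ltnW.
  have h3 : - (r%:R * u m0) <= m0%:R * `|u m0|.
    rewrite -mulrN; apply: le_trans (_ : r%:R * `|u m0| <= _).
      by rewrite ler_wpM2l // -normrN ler_norm.
    by rewrite ler_wpM2r.
  have h4 : r%:R * a 1 <= m0%:R * `|a 1|.
    apply: le_trans (_ : r%:R * `|a 1| <= _).
      by rewrite ler_wpM2l // ler_norm.
    by rewrite ler_wpM2r.
  rewrite /D; lra.
exists (Num.trunc (2 * D / e)).+1 => // k /= hK.
have k0 : (0 < k)%N by apply: leq_trans hK.
have kR : 0 < k%:R :> R by rewrite ltr0n.
have hD : D / k%:R <= e / 2.
  rewrite ler_pdivrMr // mulrC -ler_pdivrMr ?divr_gt0 // invf_div mulrA.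
  apply/ltW; rewrite [D * 2]mulrC; apply: lt_le_trans (truncnS_gt _) _.
  by rewrite ler_nat.
have hu : u k <= u m0 + D / k%:R.
  rewrite /u ler_pdivrMr // mulrDl divfK ?gt_eqF // mulrC; exact: hk.
have hL := S_inf k0; rewrite -/L in hL.
rewrite ler0_norm ?subr_le0 //; lra.
Qed.

End Fekete.

Lemma ucl (R : realType) (n : nat) (f : ('I_n.+1 -> R) -> ('I_n.+1 -> R)) (hf : topical f) :
  upper_cycle_time f = inf [set aa f k / k%:R | k in [set k | (0 < k)%N]].
Proof.
rewrite /upper_cycle_time.
have H := u_cvg (aa0 f) (aa_sub hf) (aa_low hf). apply: (cvg_lim (@norm_hausdorff _ _)) H.
Qed.

Lemma cyc_le (R : realType) (n : nat) (f : ('I_n.+1 -> R) -> ('I_n.+1 -> R)) (hf : topical f)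
  (y : 'I_n.+1 -> R) (lam : R) : (forall i, f y i <= y i + lam) -> upper_cycle_time f <= lam.
Proof.
move=> H; rewrite (ucl hf).
set L := inf _.
pose c := vmax (fun i => - y i).
pose C := vmax y + c.
have hk : forall k, (0 < k)%N -> L <= C / k%:R + lam.
  move=> k k0; apply: le_trans (S_inf (aa_low hf) k0) _.
  have kR : 0 < k%:R :> R by rewrite ltr0n.
  rewrite ler_pdivrMr // mulrDl divfK ?gt_eqF //.
  apply: vmax_le => i.
  apply: le_trans (_ : iter k f (fun j => y j + c) i <= _).
    apply: iter_mono => // j; rewrite -lerBlDl sub0r; exact: (vmax_ge (fun i => - y i)).
  rewrite iter_hom //; apply: le_trans (lerD (iter_sub hf H k i) (lexx c)) _.
  have := vmax_ge y i; rewrite /C; lra.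
apply/ler_addgt0Pr => e e0.
have := hk (Num.trunc (`|C| / e)).+1 isT.
set k := (Num.trunc _).+1.
have kR : 0 < k%:R :> R by rewrite ltr0n.
have : C / k%:R <= e.
  apply: le_trans (_ : `|C| / k%:R <= e).
    by rewrite ler_pM2r ?invr_gt0 // ler_norm.
  rewrite ler_pdivrMr // mulrC -ler_pdivrMr //; apply/ltW; exact: truncnS_gt.
lra.
Qed.

Unset Implicit Arguments.
Local Close Scope classical_set_scope.

Theorem theorem2p4 (R : realType) (n : nat) (hn : (0 < n)%N)
  (f : ('I_n -> R) -> ('I_n -> R)) (hf : topical f) (x : 'I_n -> R) :
  exists i : 'I_n, forall k : nat,
    x i + k%:R * upper_cycle_time f <= iter k f x i.
Proof.
case: n hn f hf x => // n _ f hf x.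
set L := upper_cycle_time f.
apply: contrapT => Hn.
have H : forall i, exists k, iter k f x i < x i + k%:R * L.
  move=> i; apply: contrapT => Hi; apply: Hn; exists i => k.
  rewrite leNgt; apply/negP => hlt; apply: Hi; by exists k.
have [kf Hkf] := choice H.
pose d i := x i + (kf i)%:R * L - iter (kf i) f x i.
have dpos : forall i, 0 < d i by move=> i; rewrite subr_gt0.
pose i0 := [arg min_(i < ord0) d i]%O.
have hi0 : forall i, d i0 <= d i.
  by rewrite /i0; case: arg_minP => // j _ Hj i; exact: Hj.
pose del := d i0.
have del0 : 0 < del by exact: dpos.
have kpos : forall i, (0 < kf i)%N.
  move=> i; rewrite lt0n; apply/negP => /eqP e; have := Hkf i; rewrite e /=.
  by rewrite mul0r addr0 ltxx.
pose Nk := (\max_i kf i)%N.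
have hkN : forall i, (kf i <= Nk)%N by move=> i; exact: leq_bigmax.
have Nk0 : (0 < Nk)%N by apply: leq_trans (kpos ord0) (hkN ord0).
pose eps := del / Nk%:R.
have eps0 : 0 < eps by rewrite divr_gt0 // ltr0n.
have hke : forall i, (kf i)%:R * eps <= del.
  move=> i; rewrite /eps mulrA ler_pdivrMr ?ltr0n // mulrC ler_wpM2l ?(ltW del0) // ler_nat.
  exact: hkN.
pose term (j : 'I_Nk.+1) t := iter j f x t + j%:R * (eps - L).
pose jm t := [arg min_(j < ord0) term j t]%O.
pose y t := term (jm t) t.
have hy : forall j t, y t <= term j t.
  by move=> j t; rewrite /y /jm; case: arg_minP => // j' _ Hj; exact: Hj.
have step : forall (j : 'I_Nk.+1) i, f y i <= iter j.+1 f x i + j%:R * (eps - L).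
  move=> j i; apply: le_trans (hf.2 y (fun t => term j t) (fun t => hy j t) i) _.
  by rewrite /term hf.1.
have key : forall i, f y i <= y i + (L - eps).
  move=> i; set j := jm i.
  case ej: (nat_of_ord j) => [|j'].
    have yi : y i = x i by rewrite /y -/j /term ej mul0r addr0.
    rewrite yi.
    have [k' ek'] : exists k', kf i = k'.+1.
      by exists (kf i).-1; rewrite prednK // kpos.
    have e1 : k'.+1%:R = k'%:R + 1 :> R by rewrite -addn1 natrD.
    have hk' : (k' < Nk.+1)%N by rewrite ltnS (leq_trans (leqnSn k')) // -ek' hkN.
    have := step (Ordinal hk') i; rewrite /=.
    have := hke i; rewrite ek' e1.
    have := hi0 i; rewrite -/del /d ek' e1 /=.
    lra.
  have e1 : j'.+1%:R = j'%:R + 1 :> R by rewrite -addn1 natrD.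
  have yi : y i = iter j'.+1 f x i + j'.+1%:R * (eps - L) by rewrite /y -/j /term ej.
  have hj' : (j' < Nk.+1)%N by rewrite -ltnS -ej ltnS ltnW.
  rewrite yi e1 /=.
  have := step (Ordinal hj') i; rewrite /=; lra.
have := cyc_le hf key; rewrite -/L; lra.
Qed.
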